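(* Let $T\in B(\mathcal{F})$ be a block-diagonal operator. If the block-diagonal operator $T-\sum_{i=1}^d R_iTR_i^*$ belongs to $\mathcal{S}$, then $T\in\mathcal{C}=C^*(L_1,\ldots,L_d)$.
   Context: $d\ge2$; $\xi_1,\ldots,\xi_d$ is the standard orthonormal basis of $\mathbb{C}^d$. $\mathcal{F}=\bigoplus_{n\ge0}\mathcal{F}_n$ is the full Fock space, $\mathcal{F}_0=\mathbb{C}\Omega$, $\mathcal{F}_n=(\mathbb{C}^d)^{\otimes n}$ with the usual inner product. $L_j\eta=\xi_j\otimes\eta$, $R_j\eta=\eta\otimes\xi_j$ (with $L_j\Omega=R_j\Omega=\xi_j$). $T$ is block-diagonal if $T(\mathcal{F}_n)\subseteq\mathcal{F}_n$ for all $n$. $\mathcal{S}$ is the set of operators $S\in B(\mathcal{F})$ which are band-limited (there is $b\ge0$ with $S(\mathcal{F}_n)\subseteq\bigoplus_{|m-n|\le b}\mathcal{F}_m$ for all $n$) and summable ($\sum_{n\ge0}\|S|_{\mathcal{F}_n}\|<\infty$). *)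

(* Defs.v *)
From HB Require Import structures.
From mathcomp Require Import all_boot all_order all_algebra.
From mathcomp Require Import reals.
From mathcomp Require Import complex.
Set Implicit Arguments. Unset Strict Implicit. Unset Printing Implicit Defensive.
Import Order.TTheory GRing.Theory Num.Theory.
Local Open Scope ring_scope.

(* Words over {0,..,d-1}; the word w of length n stands for the basis vector
   xi_{w_1} (x) ... (x) xi_{w_n} of F_n; the empty word stands for Omega.
   A vector of the Fock space is a coefficient function on words that is
   square-summable; an operator is a map on coefficient functions, of which
   only the restriction to square-summable functions matters. *)
Definition word (d : nat) := seq 'I_d.
Definition vec (R : realType) (d : nat) := word d -> R[i].
Definition op (R : realType) (d : nat) := vec R d -> vec R d.

Definition sqmod (R : realType) (z : R[i]) : R := complex.Re z ^+ 2 + complex.Im z ^+ 2.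

Definition level_sq (R : realType) (d : nat) (f : vec R d) (n : nat) : R :=
  \sum_(t : n.-tuple 'I_d) sqmod (f (tval t)).

Definition psum (R : realType) (d : nat) (f : vec R d) (N : nat) : R :=
  \sum_(n < N) level_sq f n.

Definition in_l2 (R : realType) (d : nat) (f : vec R d) : Prop :=
  exists M : R, forall N, psum f N <= M.

(* ||g|| <= c * ||f||  (for c >= 0), stated via upper bounds of ||f||^2 *)
Definition norm_le (R : realType) (d : nat) (g : vec R d) (c : R) (f : vec R d)
  : Prop :=
  forall M : R, (forall N, psum f N <= M) -> forall N, psum g N <= c ^+ 2 * M.

Definition supported_in (R : realType) (d : nat) (n : nat) (f : vec R d) : Prop :=
  forall w : word d, size w != n -> f w = 0.

(* L_i eta = xi_i (x) eta *)
Definition Lop (R : realType) (d : nat) (i : 'I_d) : op R d :=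
  fun f w => match w with
             | j :: w' => if j == i then f w' else 0
             | [::] => 0
             end.
Definition Lop_adj (R : realType) (d : nat) (i : 'I_d) : op R d :=
  fun f w => f (i :: w).
(* R_i eta = eta (x) xi_i *)
Definition Rop (R : realType) (d : nat) (i : 'I_d) : op R d :=
  fun f w => if (0 < size w)%N && (last i w == i) then f (take (size w).-1 w)
             else 0.
Definition Rop_adj (R : realType) (d : nat) (i : 'I_d) : op R d :=
  fun f w => f (rcons w i).

Definition op_add (R : realType) (d : nat) (A B : op R d) : op R d :=
  fun f w => A f w + B f w.
Definition op_sub (R : realType) (d : nat) (A B : op R d) : op R d :=
  fun f w => A f w - B f w.
Definition op_scale (R : realType) (d : nat) (a : R[i]) (A : op R d) : op R d :=
  fun f w => a * A f w.
Definition op_mul (R : realType) (d : nat) (A B : op R d) : op R d :=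
  fun f => A (B f).

Definition vadd (R : realType) (d : nat) (f g : vec R d) : vec R d :=
  fun w => f w + g w.
Definition vscale (R : realType) (d : nat) (a : R[i]) (f : vec R d) : vec R d :=
  fun w => a * f w.

Definition bounded_op (R : realType) (d : nat) (T : op R d) : Prop :=
  [/\ (forall f g, in_l2 f -> in_l2 g -> T (vadd f g) = vadd (T f) (T g)),
      (forall a f, in_l2 f -> T (vscale a f) = vscale a (T f)) &
      exists c : R, 0 <= c /\ forall f, in_l2 f -> norm_le (T f) c f].

Definition block_diagonal (R : realType) (d : nat) (T : op R d) : Prop :=
  forall n f, in_l2 f -> supported_in n f -> supported_in n (T f).

Definition band_limited (R : realType) (d : nat) (S : op R d) : Prop :=
  exists b : nat, forall n f, in_l2 f -> supported_in n f ->
    forall w, S f w != 0 -> (n <= size w + b)%N && (size w <= n + b)%N.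

(* sum_n ||S|_{F_n}|| < oo : there are bounds c n >= ||S|_{F_n}|| with
   bounded partial sums *)
Definition summable_blocks (R : realType) (d : nat) (S : op R d) : Prop :=
  exists c : nat -> R,
    [/\ (forall n, 0 <= c n),
        (exists M : R, forall N, \sum_(n < N) c n <= M) &
        forall n f, in_l2 f -> supported_in n f -> norm_le (S f) (c n) f].

Definition in_classS (R : realType) (d : nat) (S : op R d) : Prop :=
  [/\ bounded_op S, band_limited S & summable_blocks S].

(* the unital algebra generated by L_1..L_d and L_1^*..L_d^*  (it is
   *-closed, so its norm closure is C^*(L_1,...,L_d)) *)
Inductive Lpoly (R : realType) (d : nat) : op R d -> Prop :=
| LP_L i : Lpoly (Lop i)
| LP_Ladj i : Lpoly (Lop_adj i)
| LP_id : Lpoly (fun f => f)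
| LP_add A B : Lpoly A -> Lpoly B -> Lpoly (op_add A B)
| LP_scale a A : Lpoly A -> Lpoly (op_scale a A)
| LP_mul A B : Lpoly A -> Lpoly B -> Lpoly (op_mul A B).

Definition in_C (R : realType) (d : nat) (T : op R d) : Prop :=
  forall eps : R, 0 < eps ->
    exists A, Lpoly A /\ forall f, in_l2 f -> norm_le (op_sub T A f) eps f.

Definition defect (R : realType) (d : nat) (T : op R d) : op R d :=
  fun f w => T f w - \sum_(i < d) Rop i (T (Rop_adj i f)) w.

(* Main.v *)
Require Import Defs.
From HB Require Import structures.
From mathcomp Require Import all_boot all_order all_algebra.
From mathcomp Require Import reals.
From mathcomp Require Import complex.
From mathcomp Require Import ring lra.
From Stdlib Require Import FunctionalExtensionality.
Set Implicit Arguments. Unset Strict Implicit. Unset Printing Implicit Defensive.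
Import Order.TTheory GRing.Theory Num.Theory.
Local Open Scope ring_scope.


Lemma sqmod_ge0 (R : realType) (z : R[i]) : 0 <= sqmod z.
Proof. by rewrite /sqmod addr_ge0 // sqr_ge0. Qed.

Lemma sqmod0 (R : realType) : sqmod (0 : R[i]) = 0.
Proof. by rewrite /sqmod /= expr0n /= addr0. Qed.

Lemma sqmod_eq0 (R : realType) (z : R[i]) : sqmod z = 0 -> z = 0.
Proof.
case: z => a b; rewrite /sqmod /= => h.
have ha : a ^+ 2 = 0 by apply/eqP; rewrite eq_le sqr_ge0 andbT -h lerDl sqr_ge0.
have hb : b ^+ 2 = 0 by move: h; rewrite ha add0r.
by move/eqP: ha; rewrite sqrf_eq0 => /eqP ->; move/eqP: hb; rewrite sqrf_eq0 => /eqP ->.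
Qed.

Lemma ReD (R : realType) (x y : R[i]) : complex.Re (x + y) = complex.Re x + complex.Re y.
Proof. by case: x; case: y. Qed.
Lemma ImD (R : realType) (x y : R[i]) : complex.Im (x + y) = complex.Im x + complex.Im y.
Proof. by case: x; case: y. Qed.

Lemma sum_tuple_cons (V : nmodType) (I : finType) n (F : seq I -> V) :
  \sum_(t : n.+1.-tuple I) F (tval t) = \sum_(i : I) \sum_(t : n.-tuple I) F (i :: tval t).
Proof.
rewrite pair_big /=.
rewrite (reindex (fun p : I * n.-tuple I => [tuple of p.1 :: p.2])) //=.
exists (fun t : n.+1.-tuple I => (thead t, behead_tuple t)) => [[i t] _|t _] /=.
  by rewrite theadE; congr pair; apply: val_inj.
by rewrite [RHS]tuple_eta.
Qed.

Lemma sum_tuple_cat (V : nmodType) (I : finType) m k (F : seq I -> V) :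
  \sum_(t : (m + k).-tuple I) F (tval t) =
  \sum_(t1 : m.-tuple I) \sum_(t2 : k.-tuple I) F (tval t1 ++ tval t2).
Proof.
elim: m F => [|m IH] F.
  rewrite (big_pred1 [tuple]) /=; last by move=> t; have -> : t = [tuple] := tuple0 t; exact/esym/eqP.
  by apply: eq_bigr.
rewrite [in LHS](@sum_tuple_cons _ _ (m + k)).
under eq_bigr => i _ do rewrite (IH (fun s => F (i :: s))).
by rewrite (@sum_tuple_cons _ _ m (fun s => \sum_(t2 : k.-tuple I) F (s ++ tval t2))).
Qed.


Definition restr (R : realType) (d : nat) (p : pred nat) (g : vec R d) : vec R d :=
  fun x => if p (size x) then g x else 0.
Definition shiftR (R : realType) (d : nat) (v : word d) (f : vec R d) : vec R d :=
  fun x => f (x ++ v).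
Definition delta (R : realType) (d : nat) (v : word d) : vec R d :=
  fun x => if x == v then 1 else 0.

Lemma level_sq_ge0 (R : realType) d (f : vec R d) n : 0 <= level_sq f n.
Proof. by apply: sumr_ge0 => t _; apply: sqmod_ge0. Qed.

Lemma psum_ge0 (R : realType) d (f : vec R d) N : 0 <= psum f N.
Proof. by apply: sumr_ge0 => t _; apply: level_sq_ge0. Qed.

Lemma psum_le (R : realType) d (f g : vec R d) N :
  (forall n, (n < N)%N -> level_sq f n <= level_sq g n) -> psum f N <= psum g N.
Proof. by move=> h; apply: ler_sum => i _; apply: h. Qed.

Lemma level_sq_dom (R : realType) d (f g : vec R d) n :
  (forall x, sqmod (f x) <= sqmod (g x)) -> level_sq f n <= level_sq g n.
Proof. by move=> h; apply: ler_sum => t _; apply: h. Qed.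

Lemma l2_dom (R : realType) d (f g : vec R d) :
  (forall x, sqmod (f x) <= sqmod (g x)) -> in_l2 g -> in_l2 f.
Proof.
move=> h [M hM]; exists M => N; apply: le_trans (hM N).
by apply: psum_le => n _; apply: level_sq_dom.
Qed.

Lemma level_sq_restr (R : realType) d p (g : vec R d) n :
  level_sq (restr p g) n = if p n then level_sq g n else 0.
Proof.
rewrite /level_sq /restr; case: ifP => hp.
  by apply: eq_bigr => t _; rewrite size_tuple hp.
by rewrite big1 // => t _; rewrite size_tuple hp sqmod0.
Qed.

Lemma psum_restr (R : realType) d p (g : vec R d) N :
  psum (restr p g) N = \sum_(n < N | p n) level_sq g n.
Proof.
rewrite /psum [RHS]big_mkcond /=; apply: eq_bigr => n _.
by rewrite level_sq_restr.
Qed.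

Lemma psum_restr_le (R : realType) d p (g : vec R d) N :
  psum (restr p g) N <= psum g N.
Proof.
apply: psum_le => n _; rewrite level_sq_restr; case: ifP => // _.
exact: level_sq_ge0.
Qed.

Lemma l2_restr (R : realType) d p (g : vec R d) : in_l2 g -> in_l2 (restr p g).
Proof.
move=> [M hM]; exists M => N; exact: le_trans (psum_restr_le _ _ _) (hM N).
Qed.

Lemma supported_restr (R : realType) d k (g : vec R d) :
  supported_in k (restr (pred1 k) g).
Proof. by move=> w hw; rewrite /restr /= (negbTE hw). Qed.

Lemma level_sq_supp (R : realType) d k (h : vec R d) n :
  supported_in k h -> n != k -> level_sq h n = 0.
Proof.
move=> hs hn; rewrite /level_sq big1 // => t _.
by rewrite hs ?sqmod0 // size_tuple.
Qed.

Lemma psum_supp (R : realType) d k (h : vec R d) N :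
  supported_in k h -> psum h N <= level_sq h k.
Proof.
move=> hs; rewrite /psum.
case: (ltnP k N) => hk.
  rewrite (bigD1 (Ordinal hk)) //= big1 ?addr0 // => i hi.
  apply: level_sq_supp hs _; apply: contra hi => /eqP e.
  by apply/eqP; apply: val_inj.
rewrite big1 ?level_sq_ge0 // => i _; apply: level_sq_supp hs _.
by rewrite neq_ltn (leq_trans (ltn_ord i) hk).
Qed.

Lemma l2_supp (R : realType) d k (h : vec R d) : supported_in k h -> in_l2 h.
Proof. by move=> hs; exists (level_sq h k) => N; apply: psum_supp. Qed.

Lemma le_sum_one (I : finType) (R : realType) (F : I -> R) (i : I) :
  (forall j, 0 <= F j) -> F i <= \sum_j F j.
Proof.
move=> h; rewrite (bigD1 i) //= lerDl; apply: sumr_ge0 => j _; exact: h.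
Qed.

Lemma level_sq_shift (R : realType) d (v : word d) (f : vec R d) n :
  level_sq (shiftR v f) n <= level_sq f (n + size v).
Proof.
rewrite /level_sq (@sum_tuple_cat _ _ n (size v) (fun s => sqmod (f s))); apply: ler_sum => t1 _.
pose tv : (size v).-tuple 'I_d := Tuple (eqxx (size v)).
exact: (@le_sum_one _ _ (fun t2 : (size v).-tuple 'I_d => sqmod (f (tval t1 ++ tval t2))) tv (fun j => sqmod_ge0 _)).
Qed.

Lemma psum_shift (R : realType) d (v : word d) (f : vec R d) N :
  psum (shiftR v f) N <= psum f (N + size v).
Proof.
rewrite /psum; apply: le_trans (_ : \sum_(n < N) level_sq f (n + size v) <= _).
  by apply: ler_sum => n _; apply: level_sq_shift.
rewrite -(big_mkord xpredT (fun n => level_sq f (n + size v))).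
rewrite -(big_mkord xpredT (level_sq f)).
rewrite [X in _ <= X](@big_cat_nat _ _ _ (size v) 0 (N + size v)) //= ?leq_addl //.
have -> : \sum_(size v <= i < N + size v) level_sq f i = \sum_(0 <= i < N) level_sq f (i + size v).
  by rewrite -{1}(add0n (size v)) big_addn addnK.
rewrite lerDr; by apply: sumr_ge0 => n _; apply: level_sq_ge0.
Qed.

Lemma l2_shift (R : realType) d (v : word d) (f : vec R d) : in_l2 f -> in_l2 (shiftR v f).
Proof.
move=> [M hM]; exists M => N; exact: le_trans (psum_shift _ _ _) (hM _).
Qed.


Lemma tail_small (R : realType) (a : nat -> R) (M : R) :
  (forall n, 0 <= a n) -> (forall N, \sum_(n < N) a n <= M) ->
  forall e, 0 < e -> exists N, forall N', \sum_(N <= n < N') a n <= e.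
Proof.
move=> a0 hM e he.
pose E : R -> Prop := fun x => exists N : nat, x = \sum_(n < N) a n.
have hE : classical_sets.has_sup E.
  split; first by exists (\sum_(n < 0) a n); exists 0%N.
  by exists M => x [N ->].
have [x [N ->] hx] := sup_adherent he hE.
exists N => N'.
case: (leqP N N') => hN; last first.
  by rewrite big_geq ?(ltnW hN) // ltW.
have hub : \sum_(n < N') a n <= sup E.
  by apply: sup_upper_bound => //; exists N'.
move: hub; rewrite -(big_mkord xpredT) (big_cat_nat (n := N)) //= big_mkord.
move: hx; lra.
Qed.

Lemma le0_of_small (R : realType) (x c : R) :
  0 <= c -> (forall e, 0 < e -> x <= c * e) -> x <= 0.
Proof.
move=> hc h; apply/ler_addgt0Pr => e he; rewrite add0r.
have he' : 0 < e / (c + 1) by rewrite divr_gt0 // ltr_wpDl.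
apply: le_trans (h _ he') _.
rewrite mulrA ler_pdivrMr ?ltr_wpDl //; nra.
Qed.


Lemma sum_ge_cond (R : realType) (a : nat -> R) N N' :
  \sum_(n < N' | (N <= n)%N) a n = \sum_(N <= n < N') a n.
Proof.
rewrite -(big_mkord (fun n => (N <= n)%N)).
case: (leqP N N') => hN.
  rewrite (big_cat_nat (n := N)) //= [X in X + _]big_nat_cond big1 ?add0r.
    rewrite [LHS]big_nat_cond [RHS]big_nat_cond; apply: eq_bigl => n.
    by case: (N <= n)%N; rewrite ?andbT ?andbF.
  by move=> n /andP[/andP[_ h1] h2]; move: h1; rewrite ltnNge h2.
rewrite [RHS]big_geq ?(ltnW hN) // big_nat_cond big1 // => n /andP[/andP[_ h1] h2].
by move: (leq_ltn_trans h2 h1); rewrite ltnNge (ltnW hN).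
Qed.

Lemma sq_le_level (R : realType) d (h : vec R d) (u : word d) k :
  size u = k -> sqmod (h u) <= level_sq h k.
Proof.
move=> hu; rewrite /level_sq.
pose tu : k.-tuple 'I_d := Tuple (introT eqP hu).
exact: (@le_sum_one _ _ (fun t : k.-tuple 'I_d => sqmod (h (tval t))) tu (fun j => sqmod_ge0 _)).
Qed.

Lemma sq_le_psum (R : realType) d (h : vec R d) (u : word d) :
  sqmod (h u) <= psum h (size u).+1.
Proof.
apply: le_trans (sq_le_level h (erefl _)) _.
rewrite /psum.
exact: (@le_sum_one _ _ (fun n : 'I_(size u).+1 => level_sq h n) ord_max (fun j => level_sq_ge0 _ _)).
Qed.

Lemma bound_apply (R : realType) d (S : op R d) c (x : vec R d) (B : R) (u : word d) :
  norm_le (S x) c x -> (forall N, psum x N <= B) -> sqmod (S x u) <= c ^+ 2 * B.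
Proof. by move=> hn hB; apply: le_trans (sq_le_psum _ _) (hn _ hB _). Qed.

Lemma bd_zero (R : realType) d (S : op R d) (x : vec R d) n (u : word d) :
  block_diagonal S -> supported_in n x -> size u != n -> S x u = 0.
Proof. by move=> hS hx hu; apply: (hS n x (l2_supp hx) hx u hu). Qed.

Lemma S_restrict (R : realType) d (S : op R d) c (g : vec R d) (u : word d) k :
  (forall f g, in_l2 f -> in_l2 g -> S (vadd f g) = vadd (S f) (S g)) ->
  0 <= c -> (forall f, in_l2 f -> norm_le (S f) c f) ->
  block_diagonal S -> in_l2 g -> size u = k ->
  S g u = S (restr (pred1 k) g) u.
Proof.
move=> hlin hc hbd hbdiag hg hu.
have split1 : g = vadd (restr (pred1 k) g) (restr (predC1 k) g).
  apply: functional_extensionality => x; rewrite /vadd /restr /=.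
  by case: (size x == k); rewrite ?addr0 ?add0r.
rewrite {1}split1 hlin; try by apply: l2_restr. rewrite /vadd.
suff -> : S (restr (predC1 k) g) u = 0 by rewrite addr0.
have hQ : forall N, S (restr (fun n => (n < N)%N && (n != k)) g) u = 0.
  elim=> [|N IH].
    apply: (bd_zero (n := k.+1)) => //; try by rewrite hu neq_ltn ltnSn.
  have -> : restr (fun n => (n < N.+1)%N && (n != k)) g =
      vadd (restr (fun n => (n < N)%N && (n != k)) g)
           (restr (fun n => (n == N) && (n != k)) g).
    apply: functional_extensionality => x; rewrite /vadd /restr ltnS leq_eqVlt.
    by case: (ltngtP (size x) N) => _ /=; rewrite ?addr0 ?add0r.
  rewrite hlin; try by apply: l2_restr. rewrite /vadd IH add0r.
  apply: (@bd_zero _ _ S _ (if N == k then k.+1 else N)) => //.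
    move=> w hw; rewrite /restr.
    case: (eqVneq (size w) N) => [e|ne] //=.
    case: (eqVneq N k) hw => [nk|nk] hw.
      by rewrite e nk eqxx.
    by move: hw; rewrite e eqxx.
  case: (eqVneq N k) => [nk|nk]; first by rewrite hu neq_ltn ltnSn.
  by rewrite hu eq_sym.
have [M hM] := hg.
have h0 : forall n, 0 <= level_sq g n by move=> n; apply: level_sq_ge0.
apply: sqmod_eq0; apply/eqP; rewrite eq_le sqmod_ge0 andbT.
apply: (le0_of_small (c := c ^+ 2)); first exact: sqr_ge0.
move=> e he.
have [N hN] := tail_small h0 hM he.
have -> : restr (predC1 k) g = vadd (restr (fun n => (n < N)%N && (n != k)) g)
                                    (restr (fun n => (N <= n)%N && (n != k)) g).
  apply: functional_extensionality => x; rewrite /vadd /restr /=.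
  by case: (ltnP (size x) N) => _ /=; rewrite ?addr0 ?add0r.
rewrite hlin; try by apply: l2_restr. rewrite /vadd hQ add0r.
apply: bound_apply; first by apply: hbd; apply: l2_restr.
move=> N'; rewrite psum_restr; apply: le_trans (hN N').
rewrite -sum_ge_cond big_mkcond [X in _ <= X]big_mkcond /=.
apply: ler_sum => n _; case: (N <= n)%N => //=; case: (nat_of_ord n != k) => //=; exact: level_sq_ge0.
Qed.


Definition Gr (R : realType) d k (r : seq (k.-tuple 'I_d)) (g : vec R d) : vec R d :=
  fun x => if (size x == k) && (x \in map (fun t => tval t) r) then g x else 0.

Lemma supp_Gr (R : realType) d k (r : seq (k.-tuple 'I_d)) (g : vec R d) : supported_in k (Gr r g).
Proof. by move=> w hw; rewrite /Gr (negbTE hw). Qed.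

Lemma supp_delta (R : realType) d (v : word d) : supported_in (size v) (delta R v).
Proof.
move=> w hw; rewrite /delta; case: eqP => // e; by rewrite e eqxx in hw.
Qed.

Lemma supp_scale (R : realType) d n a (f : vec R d) : supported_in n f -> supported_in n (vscale a f).
Proof. by move=> h w hw; rewrite /vscale h // mulr0. Qed.

Lemma S_expand (R : realType) d (S : op R d) (g : vec R d) (u : word d) k :
  (forall f g, in_l2 f -> in_l2 g -> S (vadd f g) = vadd (S f) (S g)) ->
  (forall a f, in_l2 f -> S (vscale a f) = vscale a (S f)) ->
  S (restr (pred1 k) g) u = \sum_(v : k.-tuple 'I_d) g v * S (delta R v) u.
Proof.
move=> hlin hsc.
have key : forall r : seq (k.-tuple 'I_d), uniq r ->
    S (Gr r g) u = \sum_(v <- r) g v * S (delta R v) u.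
  elim=> [|v r IH] /=.
    move=> _; rewrite big_nil.
    have -> : Gr ([::] : seq (k.-tuple 'I_d)) g = vscale 0 (delta R [::]).
      by apply: functional_extensionality => x; rewrite /Gr /vscale mul0r andbF.
    by rewrite hsc /vscale ?mul0r //; apply: (l2_supp (supp_delta R (v := [::]))).
  move=> /andP[vr ur]; rewrite big_cons -IH //.
  have -> : Gr (v :: r) g = vadd (vscale (g v) (delta R v)) (Gr r g).
    apply: functional_extensionality => x; rewrite /Gr /vadd /vscale /delta /=.
    rewrite in_cons; case: (eqVneq x v) => [->|ne] /=.
      rewrite size_tuple eqxx /= mulr1.
      have -> : (tval v \in map (fun t => tval t) r) = false.
        by apply/negbTE; apply: contra vr => /mapP [t tr /val_inj ->].
      by rewrite addr0.
    by rewrite mulr0 add0r.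
  rewrite hlin; last exact: l2_supp (supp_Gr r g).
    by rewrite /vadd hsc; last exact: l2_supp (supp_delta R (v := tval v)).
  exact: l2_supp (supp_scale (g v) (supp_delta R (v := tval v))).
have -> : restr (pred1 k) g = Gr (index_enum (k.-tuple 'I_d)) g.
  apply: functional_extensionality => x; rewrite /Gr /restr /=.
  case: (eqVneq (size x) k) => [e|] //=.
  have -> : x \in map (fun t => tval t) (index_enum (k.-tuple 'I_d)) by
    apply/mapP; exists (Tuple (introT eqP e)) => //; rewrite mem_index_enum.
  by [].
by rewrite key ?index_enum_uniq.
Qed.


Lemma sumRop_nil (R : realType) d (X : 'I_d -> vec R d) :
  \sum_(i < d) Rop i (X i) [::] = 0.
Proof. by rewrite big1. Qed.

Lemma sumRop_rcons (R : realType) d (X : 'I_d -> vec R d) w j :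
  \sum_(i < d) Rop i (X i) (rcons w j) = X j w.
Proof.
rewrite (bigD1 j) //= big1 ?addr0.
  by rewrite /Rop size_rcons /= last_rcons eqxx -cats1 take_size_cat.
move=> i hij; rewrite /Rop size_rcons /= last_rcons.
by rewrite eq_sym (negbTE hij).
Qed.

Lemma shiftR_nil (R : realType) d (f : vec R d) : shiftR [::] f = f.
Proof. by apply: functional_extensionality => x; rewrite /shiftR cats0. Qed.

Lemma T_expand (R : realType) d (T : op R d) (w : word d) (f : vec R d) :
  T f w = \sum_(k < (size w).+1) defect T (shiftR (drop k w) f) (take k w).
Proof.
elim/last_ind: w f => [|w j IH] f.
  rewrite big_ord_recr big_ord0 /= add0r shiftR_nil /defect sumRop_nil.
  by rewrite subr0.
rewrite size_rcons big_ord_recr /=. have -> : drop (size w).+1 (rcons w j) = [::] by rewrite -(size_rcons w j) drop_size. have -> : take (size w).+1 (rcons w j) = rcons w j by rewrite -(size_rcons w j) take_size. rewrite shiftR_nil.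
have -> : T f (rcons w j) = defect T f (rcons w j) + T (Rop_adj j f) w.
  by rewrite /defect sumRop_rcons subrK.
rewrite addrC IH; congr (_ + _); apply: eq_bigr => k _.
have hk : (k <= size w)%N by rewrite -ltnS.
rewrite -cats1 takel_cat // drop_cat.
rewrite (leq_eqVlt k) in hk.
congr (defect T _ _).
apply: functional_extensionality => x; rewrite /shiftR /Rop_adj.
case: ltnP => h.
  by rewrite -cats1 catA.
have ek : k = size w :> nat by apply/eqP; rewrite eqn_leq h -ltnS ltn_ord.
by rewrite ek drop_size subnn drop0 cats0 cats1.
Qed.


Definition Lword (R : realType) d (u : word d) : op R d :=
  foldr (fun i A => op_mul (Lop i) A) (fun f => f) u.
Definition Lword_adj (R : realType) d (v : word d) : op R d :=
  foldr (fun i A => op_mul A (Lop_adj i)) (fun f => f) v.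

Arguments Lword R {d} u.
Arguments Lword_adj R {d} v.

Lemma Lword_apply (R : realType) d (u : word d) (f : vec R d) w :
  Lword R u f w = if take (size u) w == u then f (drop (size u) w) else 0.
Proof.
elim: u w => [|i u IH] w /=; first by rewrite take0 drop0.
case: w => [|j w] //=.
rewrite /op_mul /Lop IH eqseq_cons.
by case: (j == i).
Qed.

Lemma Lword_adj_apply (R : realType) d (v : word d) (f : vec R d) w :
  Lword_adj R v f w = f (v ++ w).
Proof.
elim: v f => [|i v IH] f //=.
by rewrite /op_mul IH /Lop_adj.
Qed.

Lemma Lpoly_Lword (R : realType) d (u : word d) : Lpoly (Lword R u).
Proof. elim: u => [|i u IH] /=; [exact: LP_id | exact: LP_mul (LP_L _ _) IH]. Qed.

Lemma Lpoly_Lword_adj (R : realType) d (v : word d) : Lpoly (Lword_adj R v).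
Proof. elim: v => [|i v IH] /=; [exact: LP_id | exact: LP_mul IH (LP_Ladj _ _)]. Qed.

Definition op_sumL (R : realType) d (I : Type) (r : seq I) (F : I -> op R d) : op R d :=
  foldr (fun i A => op_add (F i) A) (op_scale 0 (fun f => f)) r.

Lemma op_sumL_apply (R : realType) d (I : Type) (r : seq I) (F : I -> op R d) f w :
  op_sumL r F f w = \sum_(i <- r) F i f w.
Proof.
elim: r => [|i r IH] /=; first by rewrite big_nil /op_scale mul0r.
by rewrite big_cons /op_add IH.
Qed.

Lemma Lpoly_op_sumL (R : realType) d (I : Type) (r : seq I) (F : I -> op R d) :
  (forall i, Lpoly (F i)) -> Lpoly (op_sumL r F).
Proof.
move=> h; elim: r => [|i r IH] /=; first by apply: LP_scale; apply: LP_id.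
exact: LP_add.
Qed.

Definition Zk (R : realType) d (S : op R d) (f : vec R d) k (w : word d) : R[i] :=
  \sum_(v : k.-tuple 'I_d) S (delta R v) (take k w) * f (tval v ++ drop k w).

Definition Xop (R : realType) d (S : op R d) k : op R d :=
  op_sumL (index_enum (prod (k.-tuple 'I_d) (k.-tuple 'I_d)))
    (fun p => op_scale (S (delta R (tval p.2)) (tval p.1))
               (op_mul (Lword R (tval p.1)) (Lword_adj R (tval p.2)))).

Lemma Lpoly_Xop (R : realType) d (S : op R d) k : Lpoly (Xop S k).
Proof.
apply: Lpoly_op_sumL => p; apply: LP_scale; apply: LP_mul.
  exact: Lpoly_Lword.
exact: Lpoly_Lword_adj.
Qed.

Lemma Xop_apply (R : realType) d (S : op R d) k f w :
  Xop S k f w = if (k <= size w)%N then Zk S f k w else 0.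
Proof.
rewrite /Xop op_sumL_apply.
rewrite (_ : \sum_(i <- index_enum _) _ =
   \sum_(p : prod (k.-tuple 'I_d) (k.-tuple 'I_d))
      op_scale (S (delta R (tval p.2)) (tval p.1))
               (op_mul (Lword R (tval p.1)) (Lword_adj R (tval p.2))) f w) //.
rewrite -(pair_bigA _ (fun (u v : k.-tuple 'I_d) =>
   op_scale (S (delta R (tval v)) (tval u))
               (op_mul (Lword R (tval u)) (Lword_adj R (tval v))) f w)) /=.
rewrite /op_scale /op_mul.
under eq_bigr => u _ do under eq_bigr => v _ do
  rewrite Lword_apply Lword_adj_apply size_tuple.
case: leqP => hk.
  have hs : size (take k w) == k by rewrite size_takel.
  rewrite (bigD1 (Tuple hs)) //= [X in _ + X]big1 ?addr0.
    rewrite /Zk; apply: eq_bigr => v _; by rewrite eqxx.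
  move=> u hu; apply: big1 => v _.
  case: eqP => [e|]; last by rewrite mulr0.
  by case/eqP: hu; apply: val_inj; rewrite /= e.
apply: big1 => u _; apply: big1 => v _.
case: eqP => [e|]; last by rewrite mulr0.
have : size (take k w) = k by rewrite e size_tuple.
by rewrite size_take ltnNge (ltnW hk) /= => e2; move: hk; rewrite e2 ltnn.
Qed.


Lemma level_le_psum (R : realType) d (h : vec R d) k : level_sq h k <= psum h k.+1.
Proof.
exact: (@le_sum_one _ _ (fun n : 'I_k.+1 => level_sq h n) ord_max (fun j => level_sq_ge0 _ _)).
Qed.

Lemma BD_defect (R : realType) d (T : op R d) :
  bounded_op T -> block_diagonal T -> block_diagonal (defect T).
Proof.
move=> [hlin hsc _] hbd n f hf hs w hw.
rewrite /defect (hbd n f hf hs w hw) sub0r.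
case/lastP: w hw => [|w' j] hw; first by rewrite sumRop_nil oppr0.
rewrite sumRop_rcons.
case: n hs hw => [|n] hs hw.
  have -> : Rop_adj j f = vscale 0 f.
    apply: functional_extensionality => x; rewrite /Rop_adj /vscale mul0r.
    by apply: hs; rewrite size_rcons.
  by rewrite hsc // /vscale mul0r oppr0.
have hs' : supported_in n (Rop_adj j f).
  move=> x hx; rewrite /Rop_adj; apply: hs; by rewrite size_rcons eqSS.
have hl : in_l2 (Rop_adj j f).
  have -> : Rop_adj j f = shiftR [:: j] f.
    by apply: functional_extensionality => x; rewrite /Rop_adj /shiftR cats1.
  exact: l2_shift.
rewrite (hbd n _ hl hs' w') ?oppr0 //.
by move: hw; rewrite size_rcons eqSS.
Qed.

Lemma defect_Z (R : realType) d (T : op R d) (f : vec R d) (w : word d) k :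
  bounded_op (defect T) -> block_diagonal (defect T) -> in_l2 f -> (k <= size w)%N ->
  defect T (shiftR (drop k w) f) (take k w) = Zk (defect T) f k w.
Proof.
move=> [hlin hsc [c [hc hbd]]] hbdiag hf hk.
rewrite (S_restrict (c := c) (k := k)) //; last by rewrite size_takel.
  rewrite S_expand //; apply: eq_bigr => v _; by rewrite mulrC /shiftR.
exact: l2_shift.
Qed.

Lemma level_Z (R : realType) d (S : op R d) ck (f : vec R d) k m :
  (forall f g, in_l2 f -> in_l2 g -> S (vadd f g) = vadd (S f) (S g)) ->
  (forall a f, in_l2 f -> S (vscale a f) = vscale a (S f)) ->
  (forall g, in_l2 g -> supported_in k g -> norm_le (S g) ck g) ->
  \sum_(t : (k + m).-tuple 'I_d) sqmod (Zk S f k (tval t)) <= ck ^+ 2 * level_sq f (k + m).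
Proof.
move=> hlin hsc hbd.
rewrite (@sum_tuple_cat _ _ k m (fun s => sqmod (Zk S f k s))).
have eZ : forall (t1 : k.-tuple 'I_d) (t2 : m.-tuple 'I_d),
    Zk S f k (tval t1 ++ tval t2) = S (restr (pred1 k) (shiftR (tval t2) f)) (tval t1).
  move=> t1 t2; rewrite S_expand // /Zk take_size_cat ?size_tuple //.
  rewrite drop_size_cat ?size_tuple //; apply: eq_bigr => v _; by rewrite mulrC.
under eq_bigr => t1 _ do under eq_bigr => t2 _ do rewrite eZ.
rewrite exchange_big /=.
rewrite /level_sq (@sum_tuple_cat _ _ k m (fun s => sqmod (f s))) [X in _ <= _ * X]exchange_big /=.
rewrite mulr_sumr; apply: ler_sum => t2 _.
set g := restr (pred1 k) (shiftR (tval t2) f).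
have hg : supported_in k g by apply: supported_restr.
apply: le_trans (level_le_psum (S g) k) _.
apply: (hbd g (l2_supp hg) hg).
move=> N; apply: le_trans (psum_supp _ hg) _.
by rewrite level_sq_restr /= eqxx.
Qed.


Lemma cs_step (R : realType) (x X a A Q : R) :
  0 <= a -> 0 <= A -> 0 <= Q -> (a = 0 -> x = 0) -> X ^+ 2 <= A * Q ->
  (x + X) ^+ 2 <= (a + A) * (x ^+ 2 / a + Q).
Proof.
move=> ha hA hQ hax hX.
case: (eqVneq a 0) => [a0|an0].
  by rewrite a0 (hax a0) expr0n /= !(mul0r, add0r).
have ap : 0 < a by rewrite lt_def an0.
set q := x / a.
have xq : x = a * q by rewrite /q mulrCA divff // mulr1.
have -> : x ^+ 2 / a = a * q ^+ 2 by rewrite xq /q; field; rewrite an0.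
rewrite xq.
have key : 2 * q * X <= Q + A * q ^+ 2.
  case: (eqVneq A 0) => [A0|An0].
    have : X ^+ 2 <= 0 by rewrite A0 mul0r in hX.
    move=> hX0; have X0 : X = 0.
      by apply/eqP; rewrite -sqrf_eq0 eq_le hX0 sqr_ge0.
    by rewrite X0 A0 mulr0 mul0r addr0.
  have Ap : 0 < A by rewrite lt_def An0.
  have : 0 <= (A * q - X) ^+ 2 by apply: sqr_ge0.
  move=> h; nra.
nra.
Qed.

Lemma cs_seq (R : realType) (I : Type) (r : seq I) (a x : I -> R) :
  (forall i, 0 <= a i) -> (forall i, a i = 0 -> x i = 0) ->
  (\sum_(i <- r) x i) ^+ 2 <= (\sum_(i <- r) a i) * \sum_(i <- r) x i ^+ 2 / a i.
Proof.
move=> ha hax; elim: r => [|i r IH]; first by rewrite !big_nil expr0n /= mul0r.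
rewrite !big_cons; apply: cs_step => //.
- by apply: sumr_ge0.
- by apply: sumr_ge0 => j _; rewrite divr_ge0 ?sqr_ge0.
- exact: hax.
Qed.

Lemma cs_complex (R : realType) (I : Type) (r : seq I) (a : I -> R) (y : I -> R[i]) :
  (forall i, 0 <= a i) -> (forall i, a i = 0 -> y i = 0) ->
  sqmod (\sum_(i <- r) y i) <= (\sum_(i <- r) a i) * \sum_(i <- r) sqmod (y i) / a i.
Proof.
move=> ha hay.
have hRe : complex.Re (\sum_(i <- r) y i) = \sum_(i <- r) complex.Re (y i).
  by elim: r => [|i r IH]; rewrite ?big_nil ?big_cons // ReD IH.
have hIm : complex.Im (\sum_(i <- r) y i) = \sum_(i <- r) complex.Im (y i).
  by clear hRe; elim: r => [|i r IH]; rewrite ?big_nil ?big_cons // ImD IH.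
rewrite /sqmod hRe hIm.
have e : \sum_(i <- r) (complex.Re (y i) ^+ 2 + complex.Im (y i) ^+ 2) / a i =
  \sum_(i <- r) complex.Re (y i) ^+ 2 / a i + \sum_(i <- r) complex.Im (y i) ^+ 2 / a i.
  by rewrite -big_split /=; apply: eq_bigr => i _; rewrite mulrDl.
rewrite e mulrDr; apply: lerD; apply: cs_seq => // i h; by rewrite (hay i h).
Qed.


Lemma psum_mono (R : realType) d (g : vec R d) N N' : (N <= N')%N -> psum g N <= psum g N'.
Proof.
move=> h; rewrite /psum -!(big_mkord xpredT (level_sq g)).
rewrite [X in _ <= X](@big_cat_nat _ _ _ N 0 N') //= lerDl.
by apply: sumr_ge0 => *; apply: level_sq_ge0.
Qed.

Lemma diff_expand (R : realType) d (T : op R d) (N0 N1 : nat) (f : vec R d) (w : word d) :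
  bounded_op (defect T) -> block_diagonal (defect T) -> in_l2 f ->
  (N0 <= N1)%N -> (size w < N1)%N ->
  op_sub T (op_sumL (index_iota 0 N0) (Xop (defect T))) f w =
  \sum_(k < N1) (if (N0 <= k)%N && (k <= size w)%N then Zk (defect T) f k w else 0).
Proof.
move=> hSb hbd hf h01 hw.
rewrite /op_sub op_sumL_apply T_expand.
have hk : forall k : 'I_(size w).+1, (k <= size w)%N by move=> k; rewrite -ltnS.
under eq_bigr => k _ do rewrite (defect_Z hSb hbd hf (hk k)).
under [X in _ - X]eq_bigr => k _ do rewrite Xop_apply.
rewrite -(big_mkord xpredT (fun k => Zk (defect T) f k w)).
rewrite -(big_mkord xpredT (fun k => if (N0 <= k)%N && (k <= size w)%N then Zk (defect T) f k w else 0)).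
rewrite (big_nat_widen 0 (size w).+1 N1) // (big_nat_widen 0 N0 N1) //.
rewrite [X in X - _]big_mkcond [X in _ - X]big_mkcond -sumrB.
apply: eq_bigr => k _ /=.
rewrite ltnS; case: (leqP k (size w)) => hkw; case: (leqP N0 k) => hk0 /=;
  by rewrite ?subrr ?subr0 ?sub0r ?oppr0.
Qed.


Lemma level_Z' (R : realType) d (S : op R d) ck (f : vec R d) k n :
  (forall f g, in_l2 f -> in_l2 g -> S (vadd f g) = vadd (S f) (S g)) ->
  (forall a f, in_l2 f -> S (vscale a f) = vscale a (S f)) ->
  (forall g, in_l2 g -> supported_in k g -> norm_le (S g) ck g) ->
  (k <= n)%N ->
  \sum_(t : n.-tuple 'I_d) sqmod (Zk S f k (tval t)) <= ck ^+ 2 * level_sq f n.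
Proof.
move=> hlin hsc hbd hkn; rewrite -(subnKC hkn); exact: level_Z.
Qed.

Lemma LB (R : realType) d (S : op R d) (c : nat -> R) (f : vec R d) M N0 N1 k :
  (forall f g, in_l2 f -> in_l2 g -> S (vadd f g) = vadd (S f) (S g)) ->
  (forall a f, in_l2 f -> S (vscale a f) = vscale a (S f)) ->
  (forall n g, in_l2 g -> supported_in n g -> norm_le (S g) (c n) g) ->
  (forall N, psum f N <= M) ->
  \sum_(n < N1) \sum_(t : n.-tuple 'I_d)
     sqmod (if (N0 <= k)%N && (k <= size (tval t))%N then Zk S f k (tval t) else 0)
  <= (if (N0 <= k)%N then c k else 0) ^+ 2 * M.
Proof.
move=> hlin hsc hbd hM.
case: (leqP N0 k) => hk /=; last first.
  rewrite expr0n /= mul0r big1 // => n _; rewrite big1 // => t _; exact: sqmod0.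
apply: le_trans (_ : _ <= \sum_(n < N1) c k ^+ 2 * level_sq f n) _.
  apply: ler_sum => n _; under eq_bigr => t _ do rewrite size_tuple.
  case: (leqP k n) => hkn.
    exact: (level_Z' _ hlin hsc (hbd k) hkn).
  rewrite big1; [apply: mulr_ge0; [exact: sqr_ge0 | exact: level_sq_ge0] | move=> t _; exact: sqmod0].
rewrite -mulr_sumr; apply: ler_wpM2l; first exact: sqr_ge0.
exact: hM.
Qed.


Theorem proposition3p5 (R : realType) (d : nat) (hd : (2 <= d)%N) (T : op R d) :
  bounded_op T -> block_diagonal T ->
  in_classS (defect T) -> in_C T.
Proof.
move=> hT hbd [hSb _ [c [hc [Mc hMc] hbdk]]].
have hbdS := BD_defect hT hbd.
have [hlin hsc _] := hSb.
move=> eps heps.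
have [N0 hN0] := tail_small hc hMc heps.
exists (op_sumL (index_iota 0 N0) (Xop (defect T))); split.
  by apply: Lpoly_op_sumL => k; apply: Lpoly_Xop.
move=> f hf M hM N'.
set N1 := (N0 + N')%N.
apply: le_trans (psum_mono _ (leq_addl N0 N')) _.
have h01 : (N0 <= N1)%N by rewrite /N1 leq_addr.
pose a k := if (N0 <= k)%N then c k else 0.
pose Y k (w : word d) := if (N0 <= k)%N && (k <= size w)%N then Zk (defect T) f k w else 0.
have hLB : forall k, \sum_(n < N1) \sum_(t : n.-tuple 'I_d) sqmod (Y k (tval t)) <= a k ^+ 2 * M.
  by move=> k; apply: LB.
have hM0 : 0 <= M by apply: le_trans (psum_ge0 f 0) (hM 0%N).
have ha0 : forall k, 0 <= a k by move=> k; rewrite /a; case: ifP.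
have hay : forall k (w : word d), (size w < N1)%N -> a k = 0 -> Y k w = 0.
  move=> k w hw ak0; apply: sqmod_eq0; apply/eqP; rewrite eq_le sqmod_ge0 andbT.
  apply: (@le_trans _ _ (a k ^+ 2 * M)); last by rewrite ak0 expr0n /= mul0r.
  apply: le_trans (hLB k).
  apply: (@le_trans _ _ (\sum_(t : (size w).-tuple 'I_d) sqmod (Y k (tval t)))).
    have := @le_sum_one _ _ (fun t : (size w).-tuple 'I_d => sqmod (Y k (tval t)))
       (Tuple (eqxx (size w))) (fun j => sqmod_ge0 _).
    by [].
  exact: (@le_sum_one _ _ (fun n : 'I_N1 => \sum_(t : n.-tuple 'I_d) sqmod (Y k (tval t)))
       (Ordinal hw) (fun j => sumr_ge0 _ (fun t _ => sqmod_ge0 _))).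
set A := \sum_(k < N1) a k.
have hA : 0 <= A <= eps.
  apply/andP; split; first by apply: sumr_ge0 => k _; apply: ha0.
  apply: le_trans (hN0 N1); rewrite -sum_ge_cond [X in _ <= X]big_mkcond /=.
  by apply: ler_sum => k _; rewrite /a; case: ifP.
rewrite /psum /level_sq.
apply: le_trans (_ : _ <= \sum_(n < N1) \sum_(t : n.-tuple 'I_d)
         (A * \sum_(k < N1) sqmod (Y k (tval t)) / a k)) _.
  apply: ler_sum => n _; apply: ler_sum => t _.
  have ht : (size (tval t) < N1)%N by rewrite size_tuple.
  rewrite (diff_expand hSb hbdS hf h01 ht).
  apply: cs_complex => // k; apply: hay ht.
under eq_bigr => n _ do rewrite -mulr_sumr.
rewrite -mulr_sumr.
under eq_bigr => n _ do rewrite exchange_big.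
rewrite exchange_big /=.
apply: le_trans (_ : _ <= A * \sum_(k < N1) a k * M) _.
  apply: ler_wpM2l; first by case/andP: hA.
  apply: ler_sum => k _.
  under eq_bigr => n _ do rewrite -mulr_suml.
  rewrite -mulr_suml.
  case: (eqVneq (a k) 0) => [->|ak0].
    by rewrite invr0 mulr0 mul0r.
  have akp : 0 < a k by rewrite lt_def ak0 ha0.
  rewrite ler_pdivrMr //.
  apply: le_trans (hLB k) _.
  by rewrite expr2 mulrAC.
rewrite -mulr_suml -/A.
case/andP: hA => hA0 hAe.
rewrite mulrA expr2; apply: ler_wpM2r => //; nra.
Qed.
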